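(* Let $R$ be a commutative ring with identity and $n>1$. Every (left or right) zero-divisor in $M_n(R)$ is a two-sided zero-divisor.
   Context: An element $x$ of a ring $S$ is a left (resp. right) zero-divisor if $xy=0$ (resp. $yx=0$) for some nonzero $y\in S$; a two-sided zero-divisor if it is both. *)

(* Defs.v *)
From HB Require Import structures.
From mathcomp Require Import all_boot all_order all_algebra.
Set Implicit Arguments. Unset Strict Implicit. Unset Printing Implicit Defensive.
Import GRing.Theory.
Local Open Scope ring_scope.

Definition mx_left_zero_divisor (R : pzRingType) (n : nat) (A : 'M[R]_n) : Prop :=
  exists B : 'M[R]_n, B != 0 /\ A *m B = 0.

Definition mx_right_zero_divisor (R : pzRingType) (n : nat) (A : 'M[R]_n) : Prop :=
  exists B : 'M[R]_n, B != 0 /\ B *m A = 0.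

Definition mx_two_sided_zero_divisor (R : pzRingType) (n : nat) (A : 'M[R]_n) : Prop :=
  mx_left_zero_divisor A /\ mx_right_zero_divisor A.

(* Main.v *)
Require Import Defs.
From HB Require Import structures.
From mathcomp Require Import all_boot all_order all_algebra.
From Stdlib Require Import Classical.
Local Open Scope ring_scope.
Import GRing.Theory.

Lemma nat_step (Q : nat -> Prop) n : Q 0%N -> ~ Q n ->
  exists t, (t < n)%N /\ Q t /\ ~ Q t.+1.
Proof.
elim: n => [|n IH] h0 hn; first by [].
case: (classic (Q n)) => hq; first by exists n.
have [t [lt [q1 q2]]] := IH h0 hq.
by exists t; split => //; apply: ltnW.
Qed.

Section K.
Variable R : comPzRingType.

Lemma step n t (A : 'M[R]_n) (r : R) (f g : 'I_t -> 'I_n) (ltn : (t < n)%N) :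
  r * \det (mxsub f g A) != 0 ->
  (forall F G : 'I_t.+1 -> 'I_n, r * \det (mxsub F G A) = 0) ->
  exists C : 'M[R]_n, C != 0 /\ C *m A = 0.
Proof.
move=> Hnz Hz.
have : ~~ ([set: 'I_n] \subset f @: [set: 'I_t]).
  apply/negP => /subset_leq_card; rewrite cardsT card_ord => h1.
  have := leq_imset_card f [set: 'I_t]; rewrite cardsT card_ord => h2.
  by have := leq_trans h1 h2; rewrite leqNgt ltn.
case/subsetPn => i0 _ Hi0.
have Hf k : f k != i0 by apply: contraNneq Hi0 => <-; apply: imset_f.
pose F := fun k : 'I_t.+1 => if unlift ord_max k is Some k' then f k' else i0.
pose G := fun (j : 'I_n) (k : 'I_t.+1) => if unlift ord_max k is Some k' then g k' else j.
pose c : 'rV[R]_t.+1 := \row_a cofactor (mxsub F (G i0) A) a ord_max.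
have Hc j a : cofactor (mxsub F (G j) A) a ord_max = c 0 a.
  rewrite mxE /cofactor; congr (_ * \det _); apply/matrixP => x y.
  by rewrite !mxE /G liftK.
pose y : 'rV[R]_n := r *: (c *m rowsub F 1%:M).
have yA : y *m A = 0.
  rewrite /y -scalemxAl -mulmxA mul_rowsub_mx mul1mx; apply/rowP => j; rewrite !mxE.
  rewrite -[RHS](Hz F (G j)) (expand_det_col _ ord_max); congr (_ * _).
  apply: eq_bigr => a _; rewrite Hc mulrC !mxE /G unlift_none.
by [].

exists (\matrix_(i, j) y 0 j); split.
  apply/negP => /eqP /matrixP /(_ i0 i0); rewrite !mxE => H.
  move: Hnz; rewrite -H; apply/negP; rewrite negbK.
  rewrite (bigD1 ord_max) //= big1 ?addr0.
    rewrite !mxE /F unlift_none eqxx mulr1 /cofactor.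
    rewrite addnn -mul2n exprM sqrrN expr1n expr1n mul1r.
    apply/eqP; congr (_ * \det _); apply/matrixP => a b.
    by rewrite !mxE /G !liftK.
  move=> a ha; rewrite !mxE /F.
  case: unliftP => [a' _|ea]; last by rewrite ea eqxx in ha.
  by rewrite (negbTE (Hf a')) mulr0.
apply/matrixP => i j; rewrite !mxE.
transitivity ((y *m A) 0 j); last by rewrite yA mxE.
by rewrite mxE; apply: eq_bigr => k _; rewrite mxE.
Qed.

Lemma key n (A : 'M[R]_n) (r : R) : r != 0 -> r * \det A = 0 ->
  exists C : 'M[R]_n, C != 0 /\ C *m A = 0.
Proof.
move=> rnz rdet.
case: n A rdet => [|n] A rdet.
  by move: rnz; rewrite -[r]mulr1 -(det_mx00 A) rdet eqxx.
pose P k := exists f g : 'I_k -> 'I_n.+1, r * \det (mxsub f g A) != 0.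
have P0 : P 0%N.
  exists (fun _ => ord0), (fun _ => ord0).
  by rewrite det_mx00 mulr1.
have Pn : ~ P n.+1.
  move=> [f [g]]; apply/negP; rewrite negbK.
  rewrite -[A]mulmx1 -[A]mul1mx mxsub_mul -mul_rowsub_mx !det_mulmx.
  by rewrite -mulrA mulrCA [r * (_ * _)]mulrA rdet mul0r mulr0.
have [t [lt [[f [g Hfg]] nP]]] := @nat_step P _ P0 Pn.
apply: (@step _ _ A r f g lt Hfg) => F G; apply/eqP; apply: contraPT nP => h.
by move=> /(_ (ex_intro _ F (ex_intro _ G h))).
Qed.

End K.

Theorem corollary2 (R : comPzRingType) (n : nat) (hn : (1 < n)%N) (A : 'M[R]_n) :
  mx_left_zero_divisor A \/ mx_right_zero_divisor A ->
  mx_two_sided_zero_divisor A.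
Proof.
have ex (B : 'M[R]_n) : B != 0 -> exists i j, B i j != 0.
  move=> hB; case: (classic (exists i j, B i j != 0)) => // h.
  move: hB; rewrite (_ : B = 0) ?eqxx //.
  apply/matrixP => i j; rewrite mxE; case: (eqVneq (B i j) 0) => // hne.
  by exfalso; apply: h; exists i, j.
move=> hd; have [r [rnz rd]] : exists r : R, r != 0 /\ r * \det A = 0.
  case: hd => [[B [hB hAB]]|[B [hB hBA]]]; have [i [j hij]] := ex B hB.
  - exists (B i j); split => //.
    have := congr1 (fun M => (\adj A *m M) i j) hAB.
    by rewrite /= mulmxA mul_adj_mx mul_scalar_mx mulmx0 !mxE mulrC.
  - exists (B i j); split => //.
    have := congr1 (fun M => (M *m \adj A) i j) hBA.
    by rewrite /= -mulmxA mul_mx_adj mul_mx_scalar mul0mx !mxE mulrC.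
split.
  have rdT : r * \det A^T = 0 by rewrite det_tr.
  have [C [hC hCA]] := @key _ _ _ _ rnz rdT.
exists C^T; split. apply/negP=> /eqP hc; move: hC; rewrite -[C]trmxK hc trmx0 eqxx. done. by rewrite -[A]trmxK -trmx_mul hCA trmx0. have [C [hC hCA]] := @key _ _ _ _ rnz rd.
by exists C.
Qed.
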